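(* Let $Q$ be a conjunctive query without self-joins and $A$ a universal attribute of $Q$. Then $Q$ contains a hard structure if and only if $Q_{-A}$ contains a hard structure, where $Q_{-A}$ is obtained by removing $A$ from every relation of $Q$ and from its head.
   Context: CQ $Q(\mathbf{A}) :- R_1(\mathbb{A}_1),\dots,R_p(\mathbb{A}_p)$ with distinct relation symbols, $\mathrm{attr}(R_i)=\mathbb{A}_i$, $\mathrm{attr}(Q)=\bigcup_i\mathbb{A}_i$, $\mathrm{head}(Q)=\mathbf{A}$. An attribute is universal if it is in $\mathrm{head}(Q)$ and in every $\mathbb{A}_i$. Standing assumption: distinct relations have distinct attribute sets. $R_j$ is exogenous if another relation $R_i$ has $\mathrm{attr}(R_i)\subsetneq\mathrm{attr}(R_j)$, endogenous otherwise. A path between relations $R_i,R_j$ using only attributes in a set $S$ is a sequence of relations from $R_i$ to $R_j$ in which consecutive relations share an attribute of $S$. Triad-like structure: three endogenous relations such that for each pair there is a path between them using only attributes in $\mathrm{attr}(Q)\setminus(\mathrm{head}(Q)\cup\mathrm{attr}(R))$, $R$ the third relation. $R_j$ is dominated by $R_i$ if (1) $\mathrm{attr}(R_i)\subseteq\mathrm{attr}(R_j)$; (2) for every $R_k$ with $\mathrm{attr}(R_i)\setminus\mathrm{attr}(R_k)\ne\emptyset$, $\mathrm{attr}(R_j)\cap\mathrm{attr}(R_k)\subseteq\mathrm{attr}(R_i)\cap\mathrm{head}(Q)$; (3) $\mathrm{attr}(R_i)\subseteq\mathrm{head}(Q)$ or $\mathrm{head}(Q)\subseteq\mathrm{attr}(R_i)$;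 non-dominated relations are those dominated by no other relation. Strand: two non-dominated relations $R_i,R_j$ with $\mathrm{head}(Q)\cap\mathrm{attr}(R_i)\ne\mathrm{head}(Q)\cap\mathrm{attr}(R_j)$ and $(\mathrm{attr}(R_i)\cap\mathrm{attr}(R_j))\setminus\mathrm{head}(Q)\ne\emptyset$. The head join of non-dominated relations is the full query formed by the non-dominated relations restricted to $\mathrm{head}(Q)$; a full query is hierarchical if for all attributes $A,B$ the sets of relations containing them are nested or disjoint. $Q$ contains a hard structure if it contains a triad-like structure or a strand, or the head join of its non-dominated relations is non-hierarchical. *)

(* Defs.v *)
(* A conjunctive query without self-joins is represented by
   a finite type [Att] of attributes, relations indexed by ['I_p] (distinct
   indices = distinct relation symbols) with attribute sets [rels i], and a
   head attribute set [head]. *)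
From mathcomp Require Import all_boot.
Set Implicit Arguments. Unset Strict Implicit. Unset Printing Implicit Defensive.

Section CQ.
Variables (Att : finType) (p : nat).
Implicit Types (rels : 'I_p -> {set Att}) (head : {set Att}).

Definition attrQ rels : {set Att} := \bigcup_(i < p) rels i.

Definition wf_query rels head : Prop := head \subset attrQ rels.

Definition distinct_attrs rels : Prop := injective rels.

Definition universal rels head (A : Att) : Prop :=
  A \in head /\ forall i, A \in rels i.

Definition exogenous rels (j : 'I_p) : Prop := exists i, rels i \proper rels j.
Definition endogenous rels (j : 'I_p) : Prop := ~ exogenous rels j.

Definition share_in rels (S : {set Att}) : rel 'I_p :=
  fun k l => [exists a in S, (a \in rels k) && (a \in rels l)].

Definition path_using rels (S : {set Att}) (i j : 'I_p) : Prop :=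
  connect (share_in rels S) i j.

Definition avoid rels head (k : 'I_p) : {set Att} :=
  attrQ rels :\: (head :|: rels k).

Definition triad_like rels head : Prop :=
  exists i j k : 'I_p,
    [/\ i != j, j != k & i != k] /\
    [/\ endogenous rels i, endogenous rels j & endogenous rels k] /\
    [/\ path_using rels (avoid rels head k) i j,
        path_using rels (avoid rels head i) j k &
        path_using rels (avoid rels head j) i k].

Definition dominated_by rels head (j i : 'I_p) : bool :=
  [&& rels i \subset rels j,
      [forall k, (rels i :\: rels k != set0) ==>
         (rels j :&: rels k \subset rels i :&: head)] &
      (rels i \subset head) || (head \subset rels i)].

Definition non_dominated rels head (j : 'I_p) : bool :=
  [forall i, (i != j) ==> ~~ dominated_by rels head j i].

Definition strand rels head : Prop :=
  exists i j : 'I_p,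
    [/\ non_dominated rels head i, non_dominated rels head j,
        head :&: rels i != head :&: rels j &
        (rels i :&: rels j) :\: head != set0].

(* the head join: relations R_i ∩ head(Q) for non-dominated R_i.
   The set of its relations containing attribute a: *)
Definition hj_rels_of rels head (a : Att) : {set 'I_p} :=
  [set i | non_dominated rels head i && (a \in rels i :&: head)].

Definition head_join_hierarchical rels head : Prop :=
  forall a b : Att,
    let Ra := hj_rels_of rels head a in
    let Rb := hj_rels_of rels head b in
    [\/ Ra \subset Rb, Rb \subset Ra | [disjoint Ra & Rb]].

Definition hard_structure rels head : Prop :=
  triad_like rels head \/ strand rels head \/ ~ head_join_hierarchical rels head.

Definition remove_rels rels (A : Att) : 'I_p -> {set Att} := fun i => rels i :\ A.
Definition remove_head head (A : Att) : {set Att} := head :\ A.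

End CQ.

(* Main.v *)
Require Import Defs.
From mathcomp Require Import all_boot.

Section Aux.
Variable (Att : finType) (A : Att).

Lemma subD1A (X Y : {set Att}) : A \in Y -> (X :\ A \subset Y :\ A) = (X \subset Y).
Proof.
move=> HY; apply/subsetP/subsetP => H x.
- move=> Hx; case: (eqVneq x A) => [->//|ne].
  by have := H x; rewrite !inE ne Hx /=; apply.
- by rewrite !inE => /andP [-> /H ->].
Qed.

Lemma eqD1A (X Y : {set Att}) : A \in X -> A \in Y -> (X :\ A == Y :\ A) = (X == Y).
Proof. by move=> HX HY; rewrite !eqEsubset !subD1A. Qed.

Lemma ID1A (X Y : {set Att}) : (X :\ A) :&: (Y :\ A) = (X :&: Y) :\ A.
Proof. by apply/setP => x; rewrite !inE; case: (x == A); rewrite ?andbF. Qed.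

Lemma DD1A (X Y : {set Att}) : A \in Y -> (X :\ A) :\: (Y :\ A) = X :\: Y.
Proof.
move=> HY; apply/setP => x; rewrite !inE; case: (eqVneq x A) => [->|]; rewrite ?HY //=.
Qed.

Lemma properD1A (X Y : {set Att}) : A \in X -> A \in Y ->
  (X :\ A \proper Y :\ A) = (X \proper Y).
Proof. by move=> HX HY; rewrite !properE !subD1A. Qed.
End Aux.

Theorem lemma8 (Att : finType) (p : nat) (rels : 'I_p -> {set Att})
    (head : {set Att}) (A : Att) :
  wf_query rels head ->
  distinct_attrs rels ->
  universal rels head A ->
  (hard_structure rels head <->
   hard_structure (remove_rels rels A) (remove_head head A)).
Proof.
move=> _ _ [Ah Ar].
set r' := remove_rels rels A; set h' := remove_head head A.
have attrE : attrQ r' = attrQ rels :\ A.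
  apply/setP => x; rewrite /attrQ /r' /remove_rels.
  apply/bigcupP/setD1P.
  - by move=> [i _ /setD1P [ne H]]; split => //; apply/bigcupP; exists i.
  - by move=> [ne /bigcupP [i _ H]]; exists i => //; apply/setD1P.
have avE : forall k, avoid r' h' k = avoid rels head k.
  move=> k; apply/setP => x; rewrite /avoid attrE /h' /r' /remove_head /remove_rels !inE.
  by case: (eqVneq x A) => [->|]; rewrite ?Ah ?andbF.
have shE : forall k, share_in r' (avoid r' h' k) =2 share_in rels (avoid rels head k).
  move=> k i j; rewrite /share_in avE; apply/existsP/existsP => [[a Ha]|[a Ha]];
  exists a; move: Ha; rewrite /r' /remove_rels /avoid !inE;
  by case: (eqVneq a A) => [->|]; rewrite ?Ah ?andbF //= ?orbT ?andbF.
have pathE : forall k i j, path_using r' (avoid r' h' k) i j <-> path_using rels (avoid rels head k) i j.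
  by move=> k i j; rewrite /path_using (eq_connect (shE k)).
have endoE : forall i, endogenous r' i <-> endogenous rels i.
  move=> i; rewrite /endogenous /exogenous /r' /remove_rels.
  by split => H [j Hj]; apply: H; exists j; rewrite ?properD1A in Hj *.
have domE : forall j i, dominated_by r' h' j i = dominated_by rels head j i.
  move=> j i; rewrite /dominated_by /r' /h' /remove_rels /remove_head !subD1A //.
  have E : forall k, ((rels i :\ A :\: (rels k :\ A) != set0) ==>
    ((rels j :\ A) :&: (rels k :\ A) \subset (rels i :\ A) :&: (head :\ A))) =
    ((rels i :\: rels k != set0) ==> (rels j :&: rels k \subset rels i :&: head)).
    by move=> k; rewrite DD1A // !ID1A subD1A // inE Ah Ar.
  by rewrite (eq_forallb E).
have ndE : forall i, non_dominated r' h' i = non_dominated rels head i.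
  by move=> i; apply: eq_forallb => k; rewrite domE.
have triE : triad_like r' h' <-> triad_like rels head.
  rewrite /triad_like; split.
  - move=> [i [j [k [H1 [[e1 e2 e3] [q1 q2 q3]]]]]].
    exists i, j, k; split; first exact H1; split.
      by split; [exact: (proj1 (endoE i) e1)|exact: (proj1 (endoE j) e2)|exact: (proj1 (endoE k) e3)].
    by split; [exact: (proj1 (pathE _ _ _) q1)|exact: (proj1 (pathE _ _ _) q2)|exact: (proj1 (pathE _ _ _) q3)].
  - move=> [i [j [k [H1 [[e1 e2 e3] [q1 q2 q3]]]]]].
    exists i, j, k; split; first exact H1; split.
      by split; [exact: (proj2 (endoE i) e1)|exact: (proj2 (endoE j) e2)|exact: (proj2 (endoE k) e3)].
    by split; [exact: (proj2 (pathE _ _ _) q1)|exact: (proj2 (pathE _ _ _) q2)|exact: (proj2 (pathE _ _ _) q3)].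
have strE : strand r' h' <-> strand rels head.
  rewrite /strand; split => [[i [j [n1 n2 ne d]]]|[i [j [n1 n2 ne d]]]];
  exists i, j; rewrite !ndE in n1 n2 *; split => //;
  move: ne d; rewrite /r' /h' /remove_rels /remove_head !ID1A ?eqD1A ?DD1A //;
  by rewrite ?inE ?Ah ?Ar.
have hjE : head_join_hierarchical r' h' <-> head_join_hierarchical rels head.
  have RE : forall a, a != A -> hj_rels_of r' h' a = hj_rels_of rels head a.
    move=> a ne; apply/setP => i; rewrite !inE ndE /r' /h' /remove_rels /remove_head ?inE. by rewrite ?ne ?andbT.
  have R'A : hj_rels_of r' h' A = set0.
    by apply/setP => i; rewrite !inE /h' /remove_head ?inE ?eqxx /= ?andbF.
  have RA : forall b, hj_rels_of rels head b \subset hj_rels_of rels head A.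
    move=> b; apply/subsetP => i; rewrite !inE => /andP [-> _].
    by rewrite Ar Ah.
  rewrite /head_join_hierarchical; split => H a b.
  - case: (eqVneq a A) => [->|na]; first by constructor 2.
    case: (eqVneq b A) => [->|nb]; first by constructor 1.
    by have := H a b; rewrite /= !RE.
  - case: (eqVneq a A) => [->|na]; first by constructor 3; rewrite R'A; apply/pred0P => x; rewrite !inE.
    case: (eqVneq b A) => [->|nb]; first by constructor 3; rewrite R'A; apply/pred0P => x; rewrite !inE andbF.
    by have := H a b; rewrite /= !RE.
move: triE strE hjE; rewrite /hard_structure; tauto.
Qed.
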